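(* Let $P,Q\in\Gamma_n$ and $0<r\le R$ with $r\le p_i/q_i\le R$ for all $i$. Let $s,t\in\mathbb{R}$ with $0\le s\le4$ and $t\ge-1$. Then $$r^{t+1}\Big(\frac{r+1}{2}\Big)^{s-t-1}(sr+4-s)\,\Omega_t(P\|Q)\le\zeta_s(P\|Q)\le R^{t+1}\Big(\frac{R+1}{2}\Big)^{s-t-1}(sR+4-s)\,\Omega_t(P\|Q).$$
   Context: $\Gamma_n=\{P=(p_1,\dots,p_n): p_i>0,\ \sum_i p_i=1\}$, $n\ge2$. For $P,Q\in\Gamma_n$ and $s\in\mathbb{R}$: $\Omega_s(P\|Q)=[s(s-1)]^{-1}\big[\sum_i p_i\big(\frac{p_i+q_i}{2p_i}\big)^s-1\big]$ for $s\ne0,1$; $\Omega_0(P\|Q)=\sum_i p_i\ln\frac{2p_i}{p_i+q_i}$; $\Omega_1(P\|Q)=\sum_i\frac{p_i+q_i}{2}\ln\frac{p_i+q_i}{2p_i}$. $\zeta_s(P\|Q)=(s-1)^{-1}\sum_i(p_i-q_i)\big(\frac{p_i+q_i}{2q_i}\big)^{s-1}$ for $s\ne1$; $\zeta_1(P\|Q)=\sum_i(p_i-q_i)\ln\frac{p_i+q_i}{2q_i}$. *)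

(* Defs.v *)
From Stdlib Require Import Reals Lra.
Open Scope R_scope.

Fixpoint sumn (n : nat) (f : nat -> R) : R :=
  match n with
  | O => 0
  | S m => sumn m f + f m
  end.

Definition Gamma (n : nat) (p : nat -> R) : Prop :=
  (forall i, (i < n)%nat -> 0 < p i) /\ sumn n p = 1.

Definition Omega (n : nat) (s : R) (p q : nat -> R) : R :=
  if Req_EM_T s 0 then
    sumn n (fun i => p i * ln (2 * p i / (p i + q i)))
  else if Req_EM_T s 1 then
    sumn n (fun i => (p i + q i) / 2 * ln ((p i + q i) / (2 * p i)))
  else
    / (s * (s - 1)) *
      (sumn n (fun i => p i * Rpower ((p i + q i) / (2 * p i)) s) - 1).

Definition zeta (n : nat) (s : R) (p q : nat -> R) : R :=
  if Req_EM_T s 1 then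
    sumn n (fun i => (p i - q i) * ln ((p i + q i) / (2 * q i)))
  else
    / (s - 1) *
      sumn n (fun i => (p i - q i) * Rpower ((p i + q i) / (2 * q i)) (s - 1)).

(* Main.v *)
Require Import Defs.
From Stdlib Require Import Reals Lra Lia.
From Coquelicot Require Import Coquelicot.
Open Scope R_scope.

Definition Zf s x := if Req_EM_T s 1 then (x-1)*ln((x+1)/2) else (x-1)*exp((s-1)*ln((x+1)/2))/(s-1).
Definition Z1f s x := if Req_EM_T s 1 then ln((x+1)/2) + (x-1)/(x+1) else exp((s-1)*ln((x+1)/2))/(s-1) + (x-1)/2*exp((s-2)*ln((x+1)/2)).
Definition Z2f s x := exp((s-3)*ln((x+1)/2))*(s*x+4-s)/4.
Definition Gf t x := if Req_EM_T t 0 then x*ln(2*x/(x+1)) else if Req_EM_T t 1 then (x+1)/2*ln((x+1)/(2*x)) else (exp((1-t)*ln x)*exp(t*ln((x+1)/2)) - 1)/(t*(t-1)).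
Definition G1f t x := if Req_EM_T t 0 then ln(2*x/(x+1)) + 1/(x+1) else if Req_EM_T t 1 then /2*ln((x+1)/(2*x)) - 1/(2*x) else exp(-t*ln x)*exp((t-1)*ln((x+1)/2))*(x+1-t)/(2*t*(t-1)).
Definition G2f t x := exp((-t-1)*ln x)*exp((t-2)*ln((x+1)/2))/4.

Lemma Eadd1 a y : 0 < y -> exp((a+1)*ln y) = exp(a*ln y) * y.
Proof. intros. rewrite Rmult_plus_distr_r, exp_plus, Rmult_1_l, exp_ln; auto. Qed.

Lemma Esh a b y : 0 < y -> a = b + 1 -> exp(a*ln y) = exp(b*ln y) * y.
Proof. intros; subst; apply Eadd1; auto. Qed.
Lemma Einv1 a y : 0<y -> a = -1 -> exp(a*ln y) = /y.
Proof. intros; subst. replace (-1*ln y) with (-(ln y)) by ring. rewrite exp_Ropp, exp_ln; auto. Qed.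
Lemma Einv2 a y : 0<y -> a = -2 -> exp(a*ln y) = /(y*y).
Proof. intros; subst. replace (-2*ln y) with (-(ln y + ln y)) by ring. rewrite exp_Ropp, exp_plus, exp_ln; auto. Qed.
Ltac fx y := try replace ((y+1)*/2) with ((y+1)/2) by reflexivity.

Ltac pos := solve [lra | ring | apply Rmult_lt_0_compat; [lra | apply Rinv_0_lt_compat; lra]
  | apply Rmult_lt_0_compat; [lra | apply Rinv_0_lt_compat; apply Rmult_lt_0_compat; lra]
  | apply Rmult_lt_0_compat; [apply Rmult_lt_0_compat; lra | apply Rinv_0_lt_compat; lra]].
Ltac sc := repeat split; pos.

Lemma dZ s y : 0 < y -> is_derive (Zf s) y (Z1f s y).
Proof.
intros Hy. unfold Zf, Z1f. destruct (Req_EM_T s 1).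
- auto_derive; [sc| unfold Rdiv; field; sc].
- auto_derive; [sc| unfold Rdiv].
  rewrite (Esh (s-1) (s-2)) by pos. field. sc.
Qed.

Lemma dZ1 s y : 0 < y -> is_derive (Z1f s) y (Z2f s y).
Proof.
intros Hy. unfold Z2f, Z1f. destruct (Req_EM_T s 1).
- subst. auto_derive; [sc| unfold Rdiv].
  rewrite (Einv2 (1-3)) by pos. field. sc.
- auto_derive; [sc| unfold Rdiv].
  rewrite (Esh (s-1) (s-2)) by pos.
  rewrite (Esh (s-2) (s-3)) by pos. field. sc.
Qed.

Lemma dG t y : 0 < y -> is_derive (Gf t) y (G1f t y).
Proof.
intros Hy. unfold Gf, G1f. destruct (Req_EM_T t 0).
- auto_derive; [sc| unfold Rdiv; field; sc].
- destruct (Req_EM_T t 1).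
  + auto_derive; [sc| unfold Rdiv; field; sc].
  + auto_derive; [sc| unfold Rdiv].
  rewrite (Esh (1-t) (-t)) by pos.
  rewrite (Esh t (t-1)) by pos. field. sc.
Qed.

Lemma dG1 t y : 0 < y -> is_derive (G1f t) y (G2f t y).
Proof.
intros Hy. unfold G2f, G1f. destruct (Req_EM_T t 0).
- subst. auto_derive; [sc| unfold Rdiv].
  rewrite (Einv1 (-0-1)) by pos. rewrite (Einv2 (0-2)) by pos. field. sc.
- destruct (Req_EM_T t 1).
  + subst. auto_derive; [sc| unfold Rdiv].
  rewrite (Einv2 (-1-1)) by pos. rewrite (Einv1 (1-2)) by pos. field. sc.
  + auto_derive; [sc| unfold Rdiv].
  rewrite (Esh (-t) (-t-1)) by pos.
  rewrite (Esh (t-1) (t-2)) by pos. field. sc.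
Qed.

Lemma mono (f df : R -> R) (a b : R) : a <= b -> (forall y, a <= y <= b -> is_derive f y (df y)) ->
  (forall y, a <= y <= b -> 0 <= df y) -> f a <= f b.
Proof.
intros Hab Hd Hp.
destruct (MVT_gen f a b df) as [c [Hc E]].
- intros x Hx. rewrite Rmin_left, Rmax_right in Hx by lra. apply Hd; lra.
- intros x Hx. rewrite Rmin_left, Rmax_right in Hx by lra.
  apply continuity_pt_filterlim. apply (ex_derive_continuous (K:=R_AbsRing) (V:=R_NormedModule)). eexists; apply Hd; lra.
- rewrite Rmin_left, Rmax_right in Hc by lra.
  assert (0 <= df c) by (apply Hp; lra).
  assert (0 <= df c * (b - a)) by (apply Rmult_le_pos; lra). lra.
Qed.

Lemma convex_pos (H H1 H2 : R -> R) (r R0 x : R) : r <= 1 <= R0 ->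
  (forall y, r <= y <= R0 -> is_derive H y (H1 y)) ->
  (forall y, r <= y <= R0 -> is_derive H1 y (H2 y)) ->
  (forall y, r <= y <= R0 -> 0 <= H2 y) -> H 1 = 0 -> H1 1 = 0 ->
  r <= x <= R0 -> 0 <= H x.
Proof.
intros Hr d1 d2 p2 h0 h1 Hx.
destruct (Rle_dec 1 x).
- rewrite <- h0. apply (mono H H1); [lra| intros; apply d1; lra|].
  intros y Hy. rewrite <- h1. apply (mono H1 H2); [lra| intros; apply d2; lra| intros; apply p2; lra].
- assert (- H x <= - H 1); [|lra].
  apply (mono (fun z => - H z) (fun z => - H1 z)); [lra| intros; apply @is_derive_opp; apply d1; lra|].
  intros y Hy. assert (H1 y <= H1 1); [|lra].
  apply (mono H1 H2); [lra| intros; apply d2; lra| intros; apply p2; lra].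
Qed.

Lemma sumn_ext n f g : (forall i, (i < n)%nat -> f i = g i) -> sumn n f = sumn n g.
Proof.
induction n; simpl; intros; auto. rewrite IHn, H; auto.
Qed.

Lemma sumn_lin n a b f g : sumn n (fun i => a * f i + b * g i) = a * sumn n f + b * sumn n g.
Proof. induction n; simpl. ring. rewrite IHn; ring. Qed.

Lemma sumn_nonneg n f : (forall i, (i < n)%nat -> 0 <= f i) -> 0 <= sumn n f.
Proof. induction n; simpl; intros. lra. assert (0 <= sumn n f) by (apply IHn; auto). assert (0 <= f n) by auto. lra. Qed.

Lemma sumn_lt n f g : (0 < n)%nat -> (forall i, (i < n)%nat -> f i < g i) -> sumn n f < sumn n g.
Proof.
induction n; simpl; intros. lia.
destruct n. simpl. specialize (H0 0%nat). assert (f 0%nat < g 0%nat) by (apply H0; lia). lra.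
assert (sumn (S n) f < sumn (S n) g) by (apply IHn; auto; lia).
assert (f (S n) < g (S n)) by auto. lra.
Qed.

Lemma one_in n p q r R0 : (1 <= n)%nat -> Gamma n p -> Gamma n q ->
  (forall i, (i < n)%nat -> r <= p i / q i <= R0) -> r <= 1 <= R0.
Proof.
intros Hn [pp sp] [qp sq] Hi. split.
- destruct (Rle_dec r 1); auto. exfalso.
  assert (sumn n q < sumn n p); [|lra].
  apply sumn_lt; [lia|]. intros i Hi'. specialize (Hi i Hi'). specialize (qp i Hi').
  assert (1 < p i / q i) by lra.
  apply (Rmult_lt_compat_r (q i)) in H; auto. unfold Rdiv in H. rewrite Rmult_assoc, Rinv_l in H; lra.
- destruct (Rle_dec 1 R0); auto. exfalso.
  assert (sumn n p < sumn n q); [|lra].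
  apply sumn_lt; [lia|]. intros i Hi'. specialize (Hi i Hi'). specialize (qp i Hi').
  assert (p i / q i < 1) by lra.
  apply (Rmult_lt_compat_r (q i)) in H; auto. unfold Rdiv in H. rewrite Rmult_assoc, Rinv_l in H; lra.
Qed.

Lemma key n p q r R0 (F F1 F2 : R -> R) : (1 <= n)%nat -> Gamma n p -> Gamma n q -> 0 < r ->
  (forall i, (i < n)%nat -> r <= p i / q i <= R0) ->
  (forall y, 0 < y -> is_derive F y (F1 y)) ->
  (forall y, 0 < y -> is_derive F1 y (F2 y)) ->
  (forall y, r <= y <= R0 -> 0 <= F2 y) -> F 1 = 0 ->
  0 <= sumn n (fun i => q i * F (p i / q i)).
Proof.
intros Hn Gp Gq Hr Hi d1 d2 p2 f0.
assert (I := one_in n p q r R0 Hn Gp Gq Hi).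
destruct Gp as [pp sp]. destruct Gq as [qp sq].
set (c := F1 1).
assert (E : sumn n (fun i => q i * F (p i / q i)) =
   sumn n (fun i => 1 * (q i * (F (p i / q i) - c * (p i / q i - 1))) + c * (p i - q i))).
{ apply sumn_ext. intros i Hi'. specialize (qp i Hi'). field. lra. }
rewrite E, sumn_lin.
assert (E2 : sumn n (fun i => p i - q i) = sumn n (fun i => 1 * p i + (-1) * q i)).
{ apply sumn_ext; intros; ring. }
rewrite E2, sumn_lin, sp, sq.
assert (0 <= sumn n (fun i => q i * (F (p i / q i) - c * (p i / q i - 1)))); [|lra].
apply sumn_nonneg. intros i Hi'. apply Rmult_le_pos. specialize (qp i Hi'); lra.
apply (convex_pos (fun x => F x - c * (x - 1)) (fun x => F1 x - c) F2 r R0); auto.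
- intros z Hz. replace (F1 z - c) with (F1 z - c * (1 - 0)) by ring.
  apply @is_derive_minus. apply d1; lra. apply @is_derive_scal. apply @is_derive_minus.
  apply @is_derive_id. apply @is_derive_const.
- intros z Hz. replace (F2 z) with (F2 z - 0) by ring.
  apply @is_derive_minus. apply d2; lra. apply @is_derive_const.
- rewrite f0; ring.
- unfold c; ring.
Qed.

Lemma dlin (f g : R -> R) a b k y : is_derive f y a -> is_derive g y b ->
  is_derive (fun x => f x - k * g x) y (a - k * b).
Proof.
intros. apply @is_derive_minus; auto. apply (is_derive_scal g y k b). auto.
Qed.

Lemma dlin2 (f g : R -> R) a b k y : is_derive f y a -> is_derive g y b ->
  is_derive (fun x => k * g x - f x) y (k * b - a).
Proof.
intros. apply @is_derive_minus; auto. apply (is_derive_scal g y k b). auto.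
Qed.

Lemma zeta_eq n s p q : (forall i, (i < n)%nat -> 0 < p i /\ 0 < q i) ->
  zeta n s p q = sumn n (fun i => q i * Zf s (p i / q i)).
Proof.
intros Hp. unfold zeta, Zf. destruct (Req_EM_T s 1).
- apply sumn_ext; intros i Hi. destruct (Hp i Hi).
  replace ((p i / q i + 1) / 2) with ((p i + q i) / (2 * q i)) by (field; lra). field; lra.
- transitivity (sumn n (fun i => / (s - 1) * ((p i - q i) * Rpower ((p i + q i) / (2 * q i)) (s - 1)) + 0 * p i)).
  + rewrite sumn_lin. ring.
  + apply sumn_ext; intros i Hi. destruct (Hp i Hi). unfold Rpower.
  replace ((p i / q i + 1) / 2) with ((p i + q i) / (2 * q i)) by (field; lra). field; lra.
Qed.

Lemma expmix t x u : 0 < x -> 0 < u ->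
  exp ((1 - t) * ln x) * exp (t * ln u) = x * exp (t * ln (u / x)).
Proof.
intros. rewrite ln_div by auto.
transitivity (exp (ln x) * exp (t*(ln u - ln x))).
- rewrite <- !exp_plus; f_equal; ring.
- rewrite exp_ln; auto.
Qed.

Lemma Omega_eq n t p q : (forall i, (i < n)%nat -> 0 < p i /\ 0 < q i) -> sumn n q = 1 ->
  Omega n t p q = sumn n (fun i => q i * Gf t (p i / q i)).
Proof.
intros Hp sq. unfold Omega, Gf. destruct (Req_EM_T t 0).
- apply sumn_ext; intros i Hi. destruct (Hp i Hi).
  replace (2 * (p i / q i) / (p i / q i + 1)) with (2 * p i / (p i + q i)) by (field; lra). field; lra.
- destruct (Req_EM_T t 1).
  + apply sumn_ext; intros i Hi. destruct (Hp i Hi).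
  replace ((p i / q i + 1) / (2 * (p i / q i))) with ((p i + q i) / (2 * p i)) by (field; lra). field; lra.
  + transitivity (sumn n (fun i => / (t * (t - 1)) * (p i * Rpower ((p i + q i) / (2 * p i)) t) + (- / (t * (t - 1))) * q i)).
    * rewrite sumn_lin, sq. ring.
    * apply sumn_ext; intros i Hi. destruct (Hp i Hi). unfold Rpower.
      assert (0 < p i / q i) by (apply Rdiv_lt_0_compat; lra).
      rewrite expmix by lra.
      replace ((p i / q i + 1) / 2 / (p i / q i)) with ((p i + q i) / (2 * p i)) by (field; lra).
      field. repeat split; try lra.
Qed.

Definition rat s t y := Rpower y (t + 1) * Rpower ((y + 1) / 2) (s - t - 1) * (s * y + 4 - s).

Lemma Z2_eq s t y : Z2f s y = rat s t y * G2f t y.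
Proof.
unfold Z2f, G2f, rat, Rpower.
assert (e1 : exp ((t + 1) * ln y) * exp ((-t-1) * ln y) = 1).
{ rewrite <- exp_plus. replace ((t + 1) * ln y + (-t-1) * ln y) with 0 by ring. apply exp_0. }
assert (e2 : exp ((s - t - 1) * ln ((y+1)/2)) * exp ((t-2) * ln ((y+1)/2)) = exp ((s-3) * ln ((y+1)/2))).
{ rewrite <- exp_plus. f_equal. ring. }
rewrite <- e2.
match goal with |- _ = ?A * ?B * ?C * (?D * ?E / 4) => 
  replace (A * B * C * (D * E / 4)) with ((A * D) * (B * E) * C / 4) by field end.
rewrite e1, Rmult_1_l. reflexivity.
Qed.

Lemma rat_mono s t r y : 0 < r <= y -> 0 <= s <= 4 -> -1 <= t -> rat s t r <= rat s t y.
Proof.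
intros Hr Hs Ht.
assert (E : forall z, 0 < z -> rat s t z = Rpower (z / ((z + 1) / 2)) (t + 1) * Rpower ((z + 1) / 2) s * (s * z + 4 - s)).
{ intros z Hz. unfold rat, Rpower. rewrite (ln_div z ((z+1)/2)) by lra. f_equal.
  rewrite <- !exp_plus. f_equal. ring. }
rewrite !E by lra.
apply Rmult_le_compat.
- apply Rmult_le_pos; unfold Rpower; left; apply exp_pos.
- nra.
- apply Rmult_le_compat.
  + unfold Rpower; left; apply exp_pos.
  + unfold Rpower; left; apply exp_pos.
  + apply Rle_Rpower_l. lra. split. apply Rdiv_lt_0_compat; lra.
    replace (r / ((r + 1) / 2)) with (2 - 2 / (r + 1)) by (field; lra).
    replace (y / ((y + 1) / 2)) with (2 - 2 / (y + 1)) by (field; lra).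
    unfold Rdiv. apply Rplus_le_compat_l, Ropp_le_contravar, Rmult_le_compat_l; [lra|].
    apply Rinv_le_contravar; lra.
  + apply Rle_Rpower_l. lra. split; lra.
- nra.
Qed.

Lemma Zf1 s : Zf s 1 = 0.
Proof. unfold Zf; destruct (Req_EM_T s 1); unfold Rdiv; ring. Qed.

Lemma Gf1 t : Gf t 1 = 0.
Proof.
unfold Gf; destruct (Req_EM_T t 0).
- replace (2 * 1 / (1 + 1)) with 1 by field. rewrite ln_1; ring.
- destruct (Req_EM_T t 1).
  + replace ((1 + 1) / (2 * 1)) with 1 by field. rewrite ln_1; ring.
  + replace ((1 + 1) / 2) with 1 by field. rewrite ln_1, !Rmult_0_r, exp_0. unfold Rdiv; ring.
Qed.

Lemma G2pos t y : 0 <= G2f t y.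
Proof. unfold G2f. left. apply Rdiv_lt_0_compat; [apply Rmult_lt_0_compat; apply exp_pos | lra]. Qed.

Theorem theorem4p1 (n : nat) (p q : nat -> R) (r R0 s t : R) :
  (2 <= n)%nat ->
  Gamma n p -> Gamma n q ->
  0 < r -> r <= R0 ->
  (forall i, (i < n)%nat -> r <= p i / q i <= R0) ->
  0 <= s <= 4 -> -1 <= t ->
  Rpower r (t + 1) * Rpower ((r + 1) / 2) (s - t - 1) * (s * r + 4 - s) * Omega n t p q
    <= zeta n s p q /\
  zeta n s p q
    <= Rpower R0 (t + 1) * Rpower ((R0 + 1) / 2) (s - t - 1) * (s * R0 + 4 - s) * Omega n t p q.
Proof.
intros Hn Gp Gq Hr HrR Hi Hs Ht.
assert (Hn1 : (1 <= n)%nat) by lia.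
assert (Hpq : forall i, (i < n)%nat -> 0 < p i /\ 0 < q i).
{ intros i Hi'. destruct Gp as [pp _]; destruct Gq as [qq _]; auto. }
assert (sq : sumn n q = 1) by (destruct Gq; auto).
assert (I := one_in n p q r R0 Hn1 Gp Gq Hi).
rewrite (zeta_eq n s p q Hpq), (Omega_eq n t p q Hpq sq).
fold (rat s t r). fold (rat s t R0).
split.
- set (m := rat s t r).
  assert (K := key n p q r R0 (fun x => Zf s x - m * Gf t x) (fun x => Z1f s x - m * G1f t x)
     (fun x => Z2f s x - m * G2f t x) Hn1 Gp Gq Hr Hi).
  assert (E : sumn n (fun i => q i * (Zf s (p i / q i) - m * Gf t (p i / q i))) =
     1 * sumn n (fun i => q i * Zf s (p i / q i)) + (- m) * sumn n (fun i => q i * Gf t (p i / q i))).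
  { rewrite <- sumn_lin. apply sumn_ext; intros; ring. }
  cbv beta in K. rewrite E in K. cut (0 <= 1 * sumn n (fun i => q i * Zf s (p i / q i)) + - m * sumn n (fun i => q i * Gf t (p i / q i))); [lra|].
  apply K.
  + intros y Hy. cbv beta. apply dlin; [apply dZ | apply dG]; auto.
  + intros y Hy. cbv beta. apply dlin; [apply dZ1 | apply dG1]; auto.
  + intros y Hy. cbv beta. rewrite (Z2_eq s t y). 
    assert (m <= rat s t y) by (apply rat_mono; auto; lra).
    assert (0 <= G2f t y) by apply G2pos. nra.
  + rewrite Zf1, Gf1; ring.
- set (m := rat s t R0).
  assert (K := key n p q r R0 (fun x => m * Gf t x - Zf s x) (fun x => m * G1f t x - Z1f s x)
     (fun x => m * G2f t x - Z2f s x) Hn1 Gp Gq Hr Hi).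
  assert (E : sumn n (fun i => q i * (m * Gf t (p i / q i) - Zf s (p i / q i))) =
     m * sumn n (fun i => q i * Gf t (p i / q i)) + (- 1) * sumn n (fun i => q i * Zf s (p i / q i))).
  { rewrite <- sumn_lin. apply sumn_ext; intros; ring. }
  cbv beta in K. rewrite E in K. cut (0 <= m * sumn n (fun i => q i * Gf t (p i / q i)) + - 1 * sumn n (fun i => q i * Zf s (p i / q i))); [lra|].
  apply K.
  + intros y Hy. cbv beta. apply dlin2; [apply dZ | apply dG]; auto.
  + intros y Hy. cbv beta. apply dlin2; [apply dZ1 | apply dG1]; auto.
  + intros y Hy. cbv beta. rewrite (Z2_eq s t y). 
    assert (rat s t y <= m) by (apply rat_mono; auto; lra).
    assert (0 <= G2f t y) by apply G2pos. nra.
  + rewrite Zf1, Gf1; ring.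
Qed.
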